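(* Let $D$ be an $m\times m$ differential matrix over a field and let $B_1,B_2$ be $m\times m$ triangular matrices. If both $\underline D_1=B_1^{-1}DB_1$ and $\underline D_2=B_2^{-1}DB_2$ are almost-Jordan, then $\underline D_1=\underline D_2$.
   Context: A differential matrix is a square matrix $D$ with $D^2=0$. A square matrix is triangular if it is upper-triangular and invertible. A differential matrix is Jordan if it is block-diagonal with each diagonal block equal to $[0]$ or $\begin{bmatrix}0&1\\0&0\end{bmatrix}$; it is almost-Jordan if $P^{-1}\underline DP$ is Jordan for some permutation matrix $P$. *)

(* Defs.v *)
From HB Require Import structures.
From mathcomp Require Import all_boot all_order all_algebra all_fingroup.
Set Implicit Arguments. Unset Strict Implicit. Unset Printing Implicit Defensive.
Import GRing.Theory.
Local Open Scope ring_scope.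

Definition differential (F : fieldType) (m : nat) (D : 'M[F]_m) : Prop :=
  D *m D = 0.

Definition triangular (F : fieldType) (m : nat) (B : 'M[F]_m) : Prop :=
  (forall i j : 'I_m, (j < i)%N -> B i j = 0) /\ B \in unitmx.

(* Entry pattern (as a boolean "is this entry 1") of the block-diagonal
   matrix whose diagonal blocks have sizes given by s (read left to right);
   a block of size 1 is [0], a block of size 2 is [[0,1],[0,0]]. *)
Fixpoint jordan_entry (s : seq nat) (i j : nat) : bool :=
  match s with
  | [::] => false
  | k :: s' =>
      if (i < k)%N && (j < k)%N then [&& k == 2%N, i == 0%N & j == 1%N]
      else if (k <= i)%N && (k <= j)%N then jordan_entry s' (i - k) (j - k)
      else false
  end.

Definition jordan (F : fieldType) (m : nat) (A : 'M[F]_m) : Prop :=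
  exists s : seq nat,
    [/\ all (fun k => (k == 1%N) || (k == 2%N)) s, sumn s = m &
        forall i j : 'I_m, A i j = (jordan_entry s i j)%:R].

Definition almost_jordan (F : fieldType) (m : nat) (A : 'M[F]_m) : Prop :=
  exists p : 'S_m, jordan (invmx (perm_mx p) *m A *m perm_mx p).

(* Main.v *)
Require Import Defs.
From HB Require Import structures.
From mathcomp Require Import all_boot all_order all_algebra all_fingroup.
Set Implicit Arguments. Unset Strict Implicit. Unset Printing Implicit Defensive.
Import GRing.Theory.
Local Open Scope ring_scope.

Definition upper (F : fieldType) (m : nat) (B : 'M[F]_m) :=
  forall i j : 'I_m, (j < i)%N -> B i j = 0.

Lemma upper_mul (F : fieldType) (m : nat) (B C : 'M[F]_m) :
  upper B -> upper C -> upper (B *m C).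
Proof.
move=> hB hC i j ji; rewrite mxE big1 // => t _.
case: (ltnP t i) => ti; first by rewrite hB ?mul0r.
by rewrite hC ?mulr0 // (leq_trans ji ti).
Qed.

Lemma upper_diag_neq0 (F : fieldType) (m : nat) (B : 'M[F]_m) :
  upper B -> B \in unitmx -> forall i, B i i != 0.
Proof.
move=> hB hU i.
have tr : is_trig_mx B^T by apply/is_trig_mxP => k l kl; rewrite mxE hB.
move: hU; rewrite unitmxE -det_tr det_trig // unitfE.
by move/prodf_neq0 => /(_ i isT); rewrite mxE.
Qed.

Lemma upper_inv (F : fieldType) (m : nat) (B : 'M[F]_m) :
  upper B -> B \in unitmx -> upper (invmx B).
Proof.
move=> hB hU k.
have hd := upper_diag_neq0 hB hU.
suff H : forall n (l : 'I_m), (l < n)%N -> (l < k)%N -> invmx B k l = 0.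
  by move=> l lk; exact: (H _ l (ltnSn l) lk).
elim=> [//|n IH] l; rewrite ltnS leq_eqVlt => /orP[/eqP ln|ln] lk; last exact: IH.
have e : (invmx B *m B) k l = 0.
  rewrite mulVmx // mxE.
  have -> : (k == l) = false by apply/eqP => e; move: lk; rewrite e ltnn.
  by [].
rewrite mxE (bigD1 l) //= big1 ?addr0 in e.
  by move: e => /eqP; rewrite mulf_eq0 (negbTE (hd l)) orbF => /eqP.
move=> t tl; case: (ltngtP t l) => [tl'|lt|tE].
- by rewrite IH ?mul0r // -?ln // (ltn_trans tl' lk).
- by rewrite hB ?mulr0.
- by move/val_inj: tE => tE; rewrite tE eqxx in tl.
Qed.

Lemma jordan_entry_succ s i j : jordan_entry s i j -> j = i.+1.
Proof.
elim: s i j => [//|k s IH] i j /=.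
case: ifP => [/andP[ik jk]|_]; first by case/and3P => _ /eqP-> /eqP->.
case: ifP => [/andP[ki kj] /IH h|//].
by rewrite -(subnK kj) h addSn subnK.
Qed.

Definition ppm (F : fieldType) (m : nat) (A : 'M[F]_m) :=
  [/\ forall k l, A k l = 0 \/ A k l = 1,
      forall k l l', A k l != 0 -> A k l' != 0 -> l = l' &
      forall k k' l, A k l != 0 -> A k' l != 0 -> k = k'].

Lemma jordan_ppm (F : fieldType) (m : nat) (J : 'M[F]_m) : jordan J -> ppm J.
Proof.
case=> s [_ _ hJ].
have nz : forall k l, J k l != 0 -> (l : nat) = k.+1.
  move=> k l; rewrite hJ; case e: (jordan_entry s k l); last by rewrite /= mulr0n eqxx.
  by move=> _; apply: (@jordan_entry_succ s); rewrite e.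
split.
- by move=> k l; rewrite hJ; case: (jordan_entry s k l); [right|left]; rewrite /= ?mulr0n.
- by move=> k l l' /nz h1 /nz h2; apply/val_inj; rewrite /= h1 h2.
- move=> k k' l /nz h1 /nz h2; apply/val_inj; apply/eqP.
  by rewrite /= -eqSS -h1 -h2.
Qed.

Lemma ppm_transfer (F : fieldType) (m : nat) (A J : 'M[F]_m) (f : 'I_m -> 'I_m) :
  injective f -> (forall k l, A k l = J (f k) (f l)) -> ppm J -> ppm A.
Proof.
move=> fi hA [h01 hr hc]; split.
- by move=> k l; rewrite hA.
- by move=> k l l'; rewrite !hA => h1 h2; apply: fi; exact: hr h1 h2.
- by move=> k k' l; rewrite !hA => h1 h2; apply: fi; exact: hc h1 h2.
Qed.

Lemma aj_ppm (F : fieldType) (m : nat) (A : 'M[F]_m) : almost_jordan A -> ppm A.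
Proof.
case=> p /jordan_ppm hJ; apply: (ppm_transfer (f := p) (@perm_inj _ p) _ hJ).
move=> k l.
have -> : invmx (perm_mx p) = perm_mx p^-1 :> 'M[F]_m.
  rewrite -[LHS]mulmx1 -(@perm_mx1 F m) -(mulgV p) perm_mxM mulmxA mulVmx ?mul1mx //.
  exact: unitmx_perm.
rewrite -row_permE -{2}(invgK p) -col_permE !mxE !permK.
by [].
Qed.

Definition Mk (F : fieldType) (m : nat) (A : 'M[F]_m) (i j : nat) : 'M[F]_m :=
  \matrix_(k, l) (if (i <= k)%N && (l < j)%N then A k l else 0).

Lemma ppm_Mk (F : fieldType) (m : nat) (A : 'M[F]_m) i j : ppm A -> ppm (Mk A i j).
Proof.
move=> [h01 hr hc]; split.
- by move=> k l; rewrite mxE; case: ifP => _; [exact: h01| left].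
- move=> k l l'; rewrite !mxE; case: ifP => _; last by rewrite eqxx.
  by case: ifP => _; [exact: hr| rewrite eqxx].
- move=> k k' l; rewrite !mxE; case: ifP => _; last by rewrite eqxx.
  by case: ifP => _; [exact: hc| rewrite eqxx].
Qed.

Definition cnt (F : fieldType) (m : nat) (N : 'M[F]_m) : nat :=
  (\sum_(k < m) ([exists l, N k l != 0%R] : nat))%N.

Lemma rank_ppm (F : fieldType) (m : nat) (N : 'M[F]_m) : ppm N -> \rank N = cnt N.
Proof.
move=> [h01 hrow hcol].
set S := [set k | [exists l, N k l != 0]].
have cntS : cnt N = #|S|.
  rewrite -sum1_card big_mkcond /=; apply: eq_bigr => k _; rewrite inE.
  by case: existsP.
rewrite cntS.
set r := #|S|.
pose e (t : 'I_r) : 'I_m := enum_val t.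
have eS : forall t, e t \in S by move=> t; exact: enum_valP.
pose L0 : 'M[F]_(r, m) := \matrix_(t, l) N (e t) l.
pose R0 : 'M[F]_(m, r) := \matrix_(k, t) ((k == e t)%:R).
have hN : N = R0 *m L0.
  apply/matrixP => k l; rewrite !mxE.
  case: (boolP (k \in S)) => kS.
  - rewrite (bigD1 (enum_rank_in kS k)) //= !mxE /e enum_rankK_in // eqxx mul1r.
    rewrite big1 ?addr0 // => t tne; rewrite !mxE.
    have : k != enum_val t.
      by apply: contra tne => /eqP ke; rewrite -{1}(enum_valK_in kS t) -ke.
    by move/negbTE ->; rewrite mul0r.
  - have z : N k l = 0.
      by move: kS; rewrite inE negb_exists => /forallP/(_ l); rewrite negbK => /eqP.
    rewrite z big1 // => t _; rewrite !mxE.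
    have : k != e t by apply: contraNneq kS => ->; exact: eS.
    by move/negbTE ->; rewrite mul0r.
have hRN : R0^T *m N = L0.
  apply/matrixP => t l; rewrite !mxE (bigD1 (e t)) //= !mxE eqxx mul1r.
  by rewrite big1 ?addr0 // => k kne; rewrite !mxE (negbTE kne) mul0r.
have hI : L0 *m L0^T = 1%:M.
  apply/matrixP => t t'; rewrite !mxE.
  case: (eqVneq t t') => [<-|tne].
  - have := eS t; rewrite inE => /existsP[l0 nz0].
    rewrite (bigD1 l0) //= big1 ?addr0.
      rewrite !mxE; case: (h01 (e t) l0) => h; first by rewrite h eqxx in nz0.
      by rewrite h mulr1.
    move=> l lne; rewrite !mxE; case: (h01 (e t) l) => [->|h]; first by rewrite mul0r.
    exfalso; move/eqP: lne; apply; apply: (hrow (e t)) => //.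
    by rewrite h oner_neq0.
  - rewrite big1 // => l _; rewrite !mxE.
    case: (h01 (e t) l) => [->|h1]; first by rewrite mul0r.
    case: (h01 (e t') l) => [->|h2]; first by rewrite mulr0.
    exfalso; move/eqP: tne; apply; apply: enum_val_inj.
    by apply: (hcol _ _ l); rewrite ?h1 ?h2 oner_neq0.
apply/eqP; rewrite eqn_leq; apply/andP; split.
  by rewrite {1}hN; apply: leq_trans (mxrankM_maxl _ _) (rank_leq_col _).
have := mxrank1 F r; rewrite -hI -hRN => <-.
by apply: leq_trans (mxrankM_maxl _ _) (mxrankM_maxr _ _).
Qed.

Lemma rankM_le (F : fieldType) (m : nat) (A Ci C : 'M[F]_m) i j :
  upper Ci -> upper C -> (\rank (Mk (Ci *m A *m C) i j) <= \rank (Mk A i j))%N.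
Proof.
move=> hCi hC.
pose p := \row_(k < m) ((i <= k)%N%:R : F).
pose q := \row_(l < m) ((l < j)%N%:R : F).
have hM : forall X : 'M[F]_m, Mk X i j = diag_mx p *m X *m diag_mx q.
  move=> X; apply/matrixP => k l; rewrite mul_mx_diag mul_diag_mx !mxE.
  by case: (i <= k)%N; case: (l < j)%N; rewrite ?mul1r ?mulr1 ?mul0r ?mulr0.
have h1 : diag_mx p *m Ci *m diag_mx p = diag_mx p *m Ci.
  apply/matrixP => k l; rewrite mul_mx_diag !mul_diag_mx !mxE.
  case: (leqP i k) => ik; case: (leqP i l) => il;
    rewrite ?mul1r ?mulr1 ?mul0r ?mulr0 //.
  by rewrite hCi // (leq_trans il ik).
have h2 : diag_mx q *m (C *m diag_mx q) = C *m diag_mx q.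
  apply/matrixP => k l; rewrite mul_mx_diag !mul_diag_mx !mxE.
  case: (ltnP k j) => kj; case: (ltnP l j) => lj;
    rewrite ?mul1r ?mulr1 ?mul0r ?mulr0 //.
  by rewrite hC // (leq_trans lj kj).
have h2X : forall X : 'M[F]_m, X *m diag_mx q *m C *m diag_mx q = X *m C *m diag_mx q.
  by move=> X; rewrite -!mulmxA h2.
have e : diag_mx p *m (Ci *m A *m C) *m diag_mx q =
         diag_mx p *m Ci *m (diag_mx p *m A *m diag_mx q) *m (C *m diag_mx q).
  by rewrite !mulmxA h1 h2X.
rewrite !hM e.
by apply: leq_trans (mxrankM_maxl _ _) _; apply: mxrankM_maxr.
Qed.

Lemma exMk (F : fieldType) (m : nat) (A : 'M[F]_m) i j k :
  [exists l, Mk A i j k l != 0] =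
  (i <= k)%N && [exists l : 'I_m, (l < j)%N && (A k l != 0)].
Proof.
apply/existsP/andP => [[l]|[ik /existsP[l /andP[lj nz]]]]; rewrite ?mxE.
- case: ifP => [/andP[ik lj] nz|_]; last by rewrite eqxx.
  by split=> //; apply/existsP; exists l; rewrite lj nz.
- by exists l; rewrite mxE ik lj.
Qed.

Lemma cnt_ident (F : fieldType) (m : nat) (A : 'M[F]_m) (io jo : 'I_m) : ppm A ->
  (cnt (Mk A io jo.+1) + cnt (Mk A io.+1 jo) =
   cnt (Mk A io jo) + cnt (Mk A io.+1 jo.+1) + (A io jo != 0%R))%N.
Proof.
move=> [h01 hr hc].
have hcs : ((A io jo != 0%R) : nat) = (\sum_(k < m) ((k == io) && (A k jo != 0%R)) : nat)%N.
  by rewrite (bigD1 io) //= eqxx big1 ?addn0 // => k /negbTE ->.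
rewrite /cnt hcs -!big_split; apply: eq_bigr => k _ /=; rewrite !exMk.
have fS : ([exists l : 'I_m, (l < jo.+1)%N && (A k l != 0%R)] : nat) =
   ([exists l : 'I_m, (l < jo)%N && (A k l != 0%R)] + (A k jo != 0%R : bool))%N.
  case: existsP => [[l /andP[lj nz]]|nex].
  - rewrite ltnS leq_eqVlt in lj; case/orP: lj => [/eqP/val_inj le|lj].
    + subst l; rewrite nz; case: existsP => // [[l' /andP[l'j nz']]].
      by move: l'j; rewrite (hr _ _ _ nz' nz) ltnn.
    + have -> : (A k jo != 0) = false.
        by apply/negbTE/negP => nz'; move: lj; rewrite (hr _ _ _ nz nz') ltnn.
      by case: existsP => // -[]; exists l; rewrite lj nz.
  - have -> : (A k jo != 0) = false.
      by apply/negbTE/negP => nz'; apply: nex; exists jo; rewrite ltnSn nz'.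
    case: existsP => // -[l /andP[lj nz]]; exfalso; apply: nex; exists l.
    by rewrite nz (ltn_trans lj (ltnSn _)).
move: fS.
case: [exists l : 'I_m, (l < jo.+1)%N && (A k l != 0)];
case: [exists l : 'I_m, (l < jo)%N && (A k l != 0)];
case: (A k jo != 0) => //= fS;
case: (ltngtP io k) => h //=.
all: try (have -> : (k == io) = false by apply/eqP => e; move: h; rewrite e ltnn).
all: try (move/val_inj: h => h; subst k; rewrite ?eqxx ?leqnn ?ltnn).
all: rewrite ?(ltnW h) ?h //=.
Qed.

Unset Implicit Arguments.

Theorem corollaryA3 (F : fieldType) (m : nat) (D B1 B2 : 'M[F]_m) :
  differential D -> triangular B1 -> triangular B2 ->
  almost_jordan (invmx B1 *m D *m B1) ->
  almost_jordan (invmx B2 *m D *m B2) ->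
  invmx B1 *m D *m B1 = invmx B2 *m D *m B2.
Proof.
move=> _ [lB1 uB1] [lB2 uB2] hJ1 hJ2.
have uI1 := upper_inv lB1 uB1.
have uI2 := upper_inv lB2 uB2.
have uC : upper (invmx B1 *m B2) := upper_mul uI1 lB2.
have uCi : upper (invmx B2 *m B1) := upper_mul uI2 lB1.
have e2 : invmx B2 *m D *m B2 =
  (invmx B2 *m B1) *m (invmx B1 *m D *m B1) *m (invmx B1 *m B2).
  by rewrite !mulmxA !(mulmxK uB1).
have e1 : invmx B1 *m D *m B1 =
  (invmx B1 *m B2) *m (invmx B2 *m D *m B2) *m (invmx B2 *m B1).
  by rewrite !mulmxA !(mulmxK uB2).
have p1 := aj_ppm hJ1; have p2 := aj_ppm hJ2.
move: e1 e2 p1 p2.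
set A1 := invmx B1 *m D *m B1; set A2 := invmx B2 *m D *m B2.
move=> e1 e2 p1 p2.
have hr : forall i j, cnt (Mk A1 i j) = cnt (Mk A2 i j).
  move=> i j; rewrite -!rank_ppm; try exact: ppm_Mk.
  apply/eqP; rewrite eqn_leq.
  apply/andP; split; [rewrite {1}e1 | rewrite {1}e2]; exact: rankM_le.
apply/matrixP => k l.
have c1 := cnt_ident k l p1; have c2 := cnt_ident k l p2.
rewrite !hr c2 in c1; move/addnI: c1 => c.
have b : (A1 k l != 0) = (A2 k l != 0) by move: c; case: (A1 k l != 0); case: (A2 k l != 0).
case: p1 => [h1 _ _]; case: p2 => [h2 _ _].
case: (h1 k l) => e1'; case: (h2 k l) => e2'; rewrite e1' e2' //;
  by move: b; rewrite e1' e2' eqxx oner_eq0.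
Qed.
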